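(* Let the real variables be $c_{11},c_{22},c_{33},c_{12},c_{23},c_{31},s_{12},s_{23},s_{31}$ (collectively $(c,s)$). Define $p_3=c_{12}(c_{23}c_{31}-s_{23}s_{31})-s_{12}(s_{23}c_{31}+c_{23}s_{31})-c_{11}c_{22}c_{33}$, $p_{ij}=c_{ij}^2+s_{ij}^2-c_{ii}c_{jj}$ for $(i,j)\in\{(1,2),(2,3),(3,1)\}$, $q_3^1=s_{12}c_{33}+c_{23}s_{31}+s_{23}c_{31}$, $q_3^2=c_{12}c_{33}-c_{23}c_{31}+s_{23}s_{31}$. Then $\{(c,s):p_3=p_{12}=p_{23}=p_{31}=0\}=\{(c,s):q_3^1=q_3^2=p_{12}=p_{23}=p_{31}=0\}$. *)

(* Defs.v *)
From Stdlib Require Export Reals.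
Open Scope R_scope.

Definition p3 (c11 c22 c33 c12 c23 c31 s12 s23 s31 : R) : R :=
  c12 * (c23 * c31 - s23 * s31) - s12 * (s23 * c31 + c23 * s31) - c11 * c22 * c33.

Definition pij (cij sij cii cjj : R) : R := cij ^ 2 + sij ^ 2 - cii * cjj.

Definition q3_1 (c11 c22 c33 c12 c23 c31 s12 s23 s31 : R) : R :=
  s12 * c33 + c23 * s31 + s23 * c31.

Definition q3_2 (c11 c22 c33 c12 c23 c31 s12 s23 s31 : R) : R :=
  c12 * c33 - c23 * c31 + s23 * s31.

(* Main.v *)
Require Import Defs.
From Stdlib Require Import Reals Lra Psatz.
Open Scope R_scope.

Theorem proposition5 :
  forall c11 c22 c33 c12 c23 c31 s12 s23 s31 : R,
    (p3 c11 c22 c33 c12 c23 c31 s12 s23 s31 = 0 /\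
     pij c12 s12 c11 c22 = 0 /\ pij c23 s23 c22 c33 = 0 /\ pij c31 s31 c33 c11 = 0)
    <->
    (q3_1 c11 c22 c33 c12 c23 c31 s12 s23 s31 = 0 /\
     q3_2 c11 c22 c33 c12 c23 c31 s12 s23 s31 = 0 /\
     pij c12 s12 c11 c22 = 0 /\ pij c23 s23 c22 c33 = 0 /\ pij c31 s31 c33 c11 = 0).
Proof.
  intros c11 c22 c33 c12 c23 c31 s12 s23 s31.
  set (P3 := p3 c11 c22 c33 c12 c23 c31 s12 s23 s31).
  set (P12 := pij c12 s12 c11 c22).
  set (P23 := pij c23 s23 c22 c33).
  set (P31 := pij c31 s31 c33 c11).
  set (Q1 := q3_1 c11 c22 c33 c12 c23 c31 s12 s23 s31).
  set (Q2 := q3_2 c11 c22 c33 c12 c23 c31 s12 s23 s31).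
  assert (E1 : Q1 * Q1 + Q2 * Q2 =
    (c22*c33+P23)*(c33*c11+P31) + c33*c33*(c11*c22+P12) - 2*c33*(P3+c11*c22*c33)).
  { unfold Q1, Q2, P3, P12, P23, P31, q3_1, q3_2, p3, pij. ring. }
  assert (E2 : P3 = c33 * P12 - c12 * Q2 - s12 * Q1).
  { unfold Q1, Q2, P3, P12, P23, P31, q3_1, q3_2, p3, pij. ring. }
  split.
  - intros [h3 [h12 [h23 h31]]].
    rewrite h3, h12, h23, h31 in E1.
    assert (Q1 * Q1 + Q2 * Q2 = 0) by (rewrite E1; ring).
    assert (Q1 = 0) by nra. assert (Q2 = 0) by nra.
    tauto.
  - intros [h1 [h2 [h12 [h23 h31]]]].
    rewrite h1, h2, h12 in E2. repeat split; auto. rewrite E2; ring.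
Qed.
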